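(* Let $C$ be a Pauli-Square-Root Clifford and $P$ a Pauli, both acting on the same $t$ qubits. Then there is a $t$-qubit Pauli $Q$ such that $$C(C)\,(I\otimes P)=C(Q)\,(I\otimes P)\,C(C),$$ where the first tensor factor is a single control qubit; moreover $Q$ either commutes or anticommutes with $C$, and $\mathrm{Supp}(Q)\subseteq\mathrm{Supp}(C)$.
   Context: Paulis are tensor products of $I,X,Y,Z$ times a phase in $\{\pm1,\pm i\}$; a Clifford is a unitary mapping Paulis to Paulis under conjugation. A Pauli-Square-Root Clifford (PSC) is a Clifford that is not a Pauli and whose square is a Pauli. For a unitary $U$ on $t$ qubits, $C(U)=|0\rangle\langle0|\otimes I+|1\rangle\langle1|\otimes U$ on $1+t$ qubits (control first). $\mathrm{Supp}(W)$ denotes the set of qubits on which an operator $W$ acts nontrivially. *)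

(* Defs.v *)
(* Scalars: an arbitrary numClosedFieldType K (e.g. algC or R[i]);
   t-qubit operators are 'M[K]_(2^t); qubit j <-> bit j of the basis index. *)
From HB Require Import structures.
From mathcomp Require Import all_boot all_order all_algebra.
Set Implicit Arguments. Unset Strict Implicit. Unset Printing Implicit Defensive.
Import Order.TTheory GRing.Theory Num.Theory.
Local Open Scope ring_scope.

Section Qubits.
Variable K : numClosedFieldType.

Definition qbit (j i : nat) : bool := odd (i %/ 2 ^ j).
Definition qclear (j i : nat) : nat := (i - qbit j i * 2 ^ j)%N.

(* single-qubit Paulis: 0 = I, 1 = X, 2 = Y, 3 = Z; entry <a| sigma |b> *)
Definition sigma (k : 'I_4) (a b : bool) : K :=
  match val k with
  | 0%N => (a == b)%:R
  | 1%N => (a != b)%:R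
  | 2%N => if a == b then 0 else if a then 'i else - 'i
  | _ => if a == b then (if a then -1 else 1) else 0
  end.

Definition pauli_string (t : nat) (p : 'I_t -> 'I_4) : 'M[K]_(2 ^ t) :=
  \matrix_(i, k) \prod_(j < t) sigma (p j) (qbit j i) (qbit j k).

Definition is_pauli (t : nat) (W : 'M[K]_(2 ^ t)) : Prop :=
  exists (c : K) (p : 'I_t -> 'I_4),
    c \in [:: 1; -1; 'i; - 'i] /\ W = c *: pauli_string p.

Definition adjmx (n : nat) (U : 'M[K]_n) : 'M[K]_n := (map_mx Num.conj U)^T.

Definition unitary (n : nat) (U : 'M[K]_n) : Prop := U *m adjmx U = 1%:M.

Definition is_clifford (t : nat) (U : 'M[K]_(2 ^ t)) : Prop :=
  unitary U /\ forall P : 'M[K]_(2 ^ t), is_pauli P -> is_pauli (U *m P *m adjmx U).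

Definition is_psc (t : nat) (U : 'M[K]_(2 ^ t)) : Prop :=
  is_clifford U /\ ~ is_pauli U /\ is_pauli (U *m U).

(* W acts trivially on qubit j: W = I_j (x) W' for some operator W' on the other qubits *)
Definition acts_trivially_on (t : nat) (W : 'M[K]_(2 ^ t)) (j : nat) : Prop :=
  exists W' : nat -> nat -> K, forall i k : 'I_(2 ^ t),
    W i k = (qbit j i == qbit j k)%:R * W' (qclear j i) (qclear j k).

Definition in_supp (t : nat) (W : 'M[K]_(2 ^ t)) (j : 'I_t) : Prop :=
  ~ acts_trivially_on W j.

(* C(U) = |0><0| (x) I + |1><1| (x) U, control qubit first *)
Definition ctrl (t : nat) (U : 'M[K]_(2 ^ t)) : 'M[K]_(2 ^ t + 2 ^ t) :=
  block_mx 1%:M 0 0 U.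

(* I (x) W, identity on the control qubit *)
Definition idtens (t : nat) (W : 'M[K]_(2 ^ t)) : 'M[K]_(2 ^ t + 2 ^ t) :=
  block_mx W 0 0 W.
End Qubits.

(* Main.v *)
Require Import Defs.
From HB Require Import structures.
From mathcomp Require Import all_boot all_order all_algebra zify ring.
Set Implicit Arguments. Unset Strict Implicit. Unset Printing Implicit Defensive.
Import Order.TTheory GRing.Theory Num.Theory.
Local Open Scope ring_scope.

Local Open Scope nat_scope.
Lemma qbit0 i : qbit 0 i = odd i.
Proof. by rewrite /qbit expn0 divn1. Qed.
Lemma qbitS l i : qbit l.+1 i = qbit l i./2.
Proof. by rewrite /qbit expnS divnMA divn2. Qed.
Lemma oddbh (b : bool) h : odd (b + h.*2) = b.
Proof. by rewrite oddD odd_double addbF; case: b. Qed.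
Lemma bh_ind (P : nat -> Prop) : (forall (b : bool) h, P (b + h.*2)) -> forall i, P i.
Proof. by move=> H i; rewrite -(odd_double_half i); apply: H. Qed.

Lemma bits_eq t i k : i < 2 ^ t -> k < 2 ^ t ->
  (forall l, l < t -> qbit l i = qbit l k) -> i = k.
Proof.
elim: t i k => [|t IH] i k.
  by rewrite expn0 !ltnS !leqn0 => /eqP-> /eqP->.
move=> Hi Hk H.
rewrite -(odd_double_half i) -(odd_double_half k).
have h0 := H 0 isT; rewrite !qbit0 in h0; rewrite h0.
congr (_ + _.*2); apply: IH.
- by rewrite ltn_half_double -muln2 -expnSr.
- by rewrite ltn_half_double -muln2 -expnSr.
by move=> l Hl; rewrite -!qbitS; apply: H.
Qed.

Definition flip j i := if qbit j i then i - 2 ^ j else i + 2 ^ j.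

Lemma flip0 (b : bool) h : flip 0 (b + h.*2) = ~~ b + h.*2.
Proof. rewrite /flip qbit0 oddbh expn0; case: b => /=; lia. Qed.

Lemma flipS j (b : bool) h : flip j.+1 (b + h.*2) = b + (flip j h).*2.
Proof.
rewrite /flip qbitS half_bit_double.
case E: (qbit j h).
  have : 2 ^ j <= h.
    move: E; rewrite /qbit -(divn_gt0 _ (expn_gt0 2 j)).
    by case: (h %/ 2 ^ j).
  rewrite expnS; lia.
rewrite expnS; lia.
Qed.

Lemma qbit_flip j i l : qbit l (flip j i) = if l == j then ~~ qbit j i else qbit l i.
Proof.
elim: j i l => [|j IH] i l; move: i; apply: bh_ind => b h.
  rewrite flip0; case: l => [|l]; rewrite ?qbit0 ?oddbh //.
  by rewrite !qbitS !half_bit_double.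
rewrite flipS; case: l => [|l]; rewrite ?qbit0 ?oddbh //.
by rewrite !qbitS !half_bit_double IH eqSS.
Qed.

Lemma flip_lt t j i : j < t -> i < 2 ^ t -> flip j i < 2 ^ t.
Proof.
elim: j t i => [|j IH] [|t] // i Hjt; move: i; apply: bh_ind => b h Hi.
  rewrite flip0; rewrite expnS in Hi *; move: Hi; case: b => /=; lia.
rewrite flipS; have Hh : h < 2 ^ t by rewrite expnS in Hi; move: Hi; case: b => /=; lia.
have := IH t h Hjt Hh. rewrite expnS; move: Hi; case: b => /=; lia.
Qed.

Lemma flipK j i : flip j (flip j i) = i.
Proof.
elim: j i => [|j IH]; apply: bh_ind => b h.
  by rewrite !flip0 negbK.
by rewrite !flipS IH.
Qed.

Lemma qclearE j i : qclear j i = if qbit j i then flip j i else i.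
Proof. by rewrite /qclear /flip; case: (qbit j i); rewrite ?mul1n ?mul0n ?subn0. Qed.

Lemma qclear_flip j i : qclear j (flip j i) = qclear j i.
Proof.
rewrite !qclearE qbit_flip eqxx; case: (qbit j i) => //=.
by rewrite flipK.
Qed.

Local Open Scope ring_scope.
Section M.
Variable K : numClosedFieldType.

Lemma sum_bits t (F : 'I_t -> bool -> K) :
  \sum_(k < 2 ^ t) \prod_(j < t) F j (qbit j k) = \prod_(j < t) \sum_(b : bool) F j b.
Proof.
rewrite bigA_distr_bigA /=.
pose g := fun k : 'I_(2 ^ t) => [ffun j : 'I_t => qbit j k].
have inj_g : injective g.
  move=> x y /ffunP H; apply/val_inj/(bits_eq (ltn_ord x) (ltn_ord y)) => l Hl.
  by have := H (Ordinal Hl); rewrite !ffunE.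
have bij_g : bijective g.
  by apply: (inj_card_bij inj_g); rewrite card_ffun card_bool !card_ord.
rewrite (reindex g) /=; last by apply: onW_bij.
by apply: eq_bigr => k _; apply: eq_bigr => j _; rewrite ffunE.
Qed.

Definition mul4 (a b : 'I_4) : 'I_4 :=
  match val a, val b with
  | 0, _ => b | _, 0 => a
  | 1, 2 => inord 3 | 2, 1 => inord 3
  | 2, 3 => inord 1 | 3, 2 => inord 1
  | 3, 1 => inord 2 | 1, 3 => inord 2
  | _, _ => ord0 end%N.
Definition ph (a b : 'I_4) : nat :=
  match val a, val b with
  | 1, 2 => 1 | 2, 1 => 3
  | 2, 3 => 1 | 3, 2 => 3
  | 3, 1 => 1 | 1, 3 => 3
  | _, _ => 0 end%N.

Ltac simpK := rewrite ?(mulrN, mulNr, mulr1, mul1r, mulr0, mul0r, addr0, add0r, opprK, oppr0, mulCii, expr0, exprS).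

Lemma sigma_mul (a b : 'I_4) x y :
  \sum_(m : bool) sigma K a x m * sigma K b m y = 'i ^+ ph a b * sigma K (mul4 a b) x y.
Proof.
rewrite big_bool.
case: a => [[|[|[|[|a]]]] Ha] //; case: b => [[|[|[|[|b]]]] Hb] //;
case: x; case: y; rewrite /sigma /mul4 /ph /= ?inordK //= ; simpK => //.
Qed.

Lemma sigma_conj (a : 'I_4) x y : (sigma K a x y)^* = sigma K a y x.
Proof.
case: a => [[|[|[|[|a]]]] Ha] //; case: x; case: y;
rewrite /sigma /= ?rmorphN ?conjCi ?rmorph1 ?rmorph0 ?opprK //.
all: by apply/eqP; rewrite eqr_oppLR; apply/eqP; exact: conjCi.
Qed.

Lemma mul4C a b : mul4 a b = mul4 b a.
Proof. by case: a => [[|[|[|[|a]]]] Ha] //; case: b => [[|[|[|[|b]]]] Hb] //; apply/val_inj. Qed.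

Lemma mul4aa a : mul4 a a = ord0.
Proof. by case: a => [[|[|[|[|a]]]] Ha] //; apply/val_inj. Qed.

Lemma phaa a : ph a a = 0%N.
Proof. by case: a => [[|[|[|[|a]]]] Ha]. Qed.

Lemma phC a b : 'i ^+ ph a b = (-1) ^+ (ph a b != ph b a) * 'i ^+ ph b a :> K.
Proof.
case: a => [[|[|[|[|a]]]] Ha] //; case: b => [[|[|[|[|b]]]] Hb] //;
rewrite /ph /= ; simpK => //.
Qed.

Lemma psE t (p : 'I_t -> 'I_4) i k :
  pauli_string K p i k = \prod_(j < t) sigma K (p j) (qbit j i) (qbit j k).
Proof. by rewrite mxE. Qed.

Lemma ps_mul t (p q : 'I_t -> 'I_4) :
  pauli_string K p *m pauli_string K q =
  'i ^+ (\sum_j ph (p j) (q j)) *: pauli_string K (fun j => mul4 (p j) (q j)).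
Proof.
apply/matrixP => i k; rewrite !mxE.
transitivity (\sum_(m < 2 ^ t) \prod_(j < t) (sigma K (p j) (qbit j i) (qbit j m) * sigma K (q j) (qbit j m) (qbit j k))).
  apply: eq_bigr => m _; rewrite !psE -big_split //.
rewrite (sum_bits (fun j b => sigma K (p j) (qbit j i) b * sigma K (q j) b (qbit j k))).
transitivity (\prod_(j<t) ('i ^+ ph (p j) (q j) * sigma K (mul4 (p j) (q j)) (qbit j i) (qbit j k))).
  by apply: eq_bigr => j _; rewrite -sigma_mul.
by rewrite big_split /= prodrXr.
Qed.

Lemma ps_adj t (p : 'I_t -> 'I_4) : adjmx (pauli_string K p) = pauli_string K p.
Proof.
apply/matrixP => i k; rewrite !mxE rmorph_prod; apply: eq_bigr => j _.
exact: sigma_conj.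
Qed.

Lemma prod_nat t (b : 'I_t -> bool) : \prod_(j < t) (b j)%:R = [forall j, b j]%:R :> K.
Proof.
case: forallP => [H|H].
  by rewrite big1 // => j _; rewrite H.
have [j Hj] : exists j, ~~ b j.
  by apply/existsP; rewrite -negb_forall; apply/forallP.
by rewrite (bigD1 j) //= (negbTE Hj) mul0r.
Qed.

Lemma ps0 t : pauli_string K (fun _ : 'I_t => ord0) = 1%:M.
Proof.
apply/matrixP => i k; rewrite !mxE.
rewrite (eq_bigr (fun j : 'I_t => (qbit j i == qbit j k)%:R)) // prod_nat.
suff -> : [forall j : 'I_t, qbit j i == qbit j k] = (i == k) by [].
apply/forallP/eqP => [H|-> j //].
apply/val_inj/(bits_eq (ltn_ord i) (ltn_ord k)) => l Hl.
exact/eqP/(H (Ordinal Hl)).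
Qed.

Lemma ps_ext t (p q : 'I_t -> 'I_4) : (forall j, p j = q j) -> pauli_string K p = pauli_string K q.
Proof. by move=> H; apply/matrixP => i k; rewrite !psE; apply: eq_bigr => j _; rewrite H. Qed.

Definition ip t (W : 'M[K]_(2 ^ t)) := exists n p, W = 'i ^+ n *: pauli_string K p.

Lemma iexp3 : 'i ^+ 3 = - 'i :> K.
Proof. by rewrite exprS sqrCi mulrN1. Qed.
Lemma iexp4 : 'i ^+ 4 = 1 :> K.
Proof. by rewrite (exprM _ 2 2) sqrCi sqrrN expr1n. Qed.

Lemma pauli_ip t (W : 'M[K]_(2 ^ t)) : is_pauli W <-> ip W.
Proof.
split.
  case=> c [p [Hc ->]]; move: Hc; rewrite !inE => /or4P [] /eqP ->.
  - by exists 0%N, p; rewrite expr0.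
  - by exists 2%N, p; rewrite sqrCi.
  - by exists 1%N, p; rewrite expr1.
  - by exists 3%N, p; rewrite iexp3.
case=> n [p ->]; exists ('i ^+ n), p; split => //.
rewrite (divn_eq n 4) exprD mulnC exprM iexp4 expr1n mul1r.
have : (n %% 4 < 4)%N := @ltn_pmod n 4 isT.
case: (n %% 4)%N => [|[|[|[|m]]]] // _; rewrite !inE.
- by rewrite expr0 eqxx.
- by rewrite expr1 eqxx !orbT.
- by rewrite sqrCi eqxx !orbT.
- by rewrite iexp3 eqxx !orbT.
Qed.

Lemma adjmxM n (A B : 'M[K]_n) : adjmx (A *m B) = adjmx B *m adjmx A.
Proof. by rewrite /adjmx map_mxM trmx_mul. Qed.
Lemma adjmxZ n c (A : 'M[K]_n) : adjmx (c *: A) = c^* *: adjmx A.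
Proof. by apply/matrixP => i j; rewrite !mxE rmorphM. Qed.
Lemma adjmxK n (A : 'M[K]_n) : adjmx (adjmx A) = A.
Proof. by apply/matrixP => i j; rewrite !mxE conjCK. Qed.
Lemma adjmxN n (A : 'M[K]_n) : adjmx (- A) = - adjmx A.
Proof. by apply/matrixP => i j; rewrite !mxE rmorphN. Qed.

Lemma conj_iexp n : ('i ^+ n)^* = (- 'i) ^+ n :> K.
Proof. by rewrite rmorphXn; congr (_ ^+ _); exact: conjCi. Qed.

Lemma ip_mul t (A B : 'M[K]_(2 ^ t)) : ip A -> ip B -> ip (A *m B).
Proof.
case=> n [p ->] [m [q ->]].
exists (n + m + \sum_j ph (p j) (q j))%N, (fun j => mul4 (p j) (q j)).
by rewrite -scalemxAl -scalemxAr ps_mul !scalerA -!exprD.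
Qed.

Lemma ip_adj t (A : 'M[K]_(2 ^ t)) : ip A -> ip (adjmx A).
Proof.
case=> n [p ->]; exists (3 * n)%N, p.
by rewrite adjmxZ ps_adj conj_iexp exprM iexp3.
Qed.

Lemma ip_adj_sign t (A : 'M[K]_(2 ^ t)) : ip A -> exists m, adjmx A = (-1) ^+ m *: A.
Proof.
case=> n [p ->]; exists n.
have E : - 'i = (-1) * 'i :> K by rewrite mulN1r.
by rewrite adjmxZ ps_adj conj_iexp scalerA E exprMn.
Qed.

Lemma ip_unitary t (A : 'M[K]_(2 ^ t)) : ip A -> A *m adjmx A = 1%:M.
Proof.
case=> n [p ->].
rewrite adjmxZ ps_adj conj_iexp -scalemxAl -scalemxAr ps_mul !scalerA -exprMn.
rewrite mulrN mulCii opprK expr1n mul1r big1 ?expr0 ?scale1r; last by move=> j _; rewrite phaa.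
rewrite (@ps_ext _ _ (fun _ => ord0)) ?ps0 // => j; exact: mul4aa.
Qed.

Lemma ip_unitary' t (A : 'M[K]_(2 ^ t)) : ip A -> adjmx A *m A = 1%:M.
Proof. by move=> /ip_unitary /mulmx1C. Qed.

Lemma ip_comm t (A B : 'M[K]_(2 ^ t)) : ip A -> ip B -> exists m, A *m B = (-1) ^+ m *: (B *m A).
Proof.
case=> n [p ->] [m [q ->]].
exists (\sum_j (ph (p j) (q j) != ph (q j) (p j)))%N.
rewrite -!(scalemxAl, scalemxAr) !ps_mul (@ps_ext _ (fun j => mul4 (q j) (p j)) (fun j => mul4 (p j) (q j))); last by move=> j; apply: mul4C.
rewrite !scalerA; congr (_ *: _).
rewrite -!prodrXr (eq_bigr (fun j : 'I_t => (-1) ^+ (ph (p j) (q j) != ph (q j) (p j)) * 'i ^+ ph (q j) (p j))); last by move=> j _; apply: phC.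
rewrite big_split /= prodrXr.
by ring.
Qed.
End M.
Section M2.
Variable K : numClosedFieldType.
Variable t : nat.
Variable j : 'I_t.

Definition Xj : 'M[K]_(2 ^ t) := pauli_string K (fun l => if l == j then @Ordinal 4 1 isT else ord0).
Definition Zj : 'M[K]_(2 ^ t) := pauli_string K (fun l => if l == j then @Ordinal 4 3 isT else ord0).
Definition flo (k : 'I_(2 ^ t)) : 'I_(2 ^ t) := Ordinal (flip_lt (ltn_ord j) (ltn_ord k)).
Definition zz (k : 'I_(2 ^ t)) : K := if qbit j k then -1 else 1.

Lemma floK k : flo (flo k) = k.
Proof. by apply/val_inj; rewrite /= flipK. Qed.

Lemma flo_eq i m : (i == flo m) = (m == flo i).
Proof. by apply/eqP/eqP => ->; rewrite floK. Qed.

Lemma Xj_entry m k : Xj m k = (m == flo k)%:R.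
Proof.
rewrite psE (eq_bigr (fun l : 'I_t => (if l == j then qbit l m != qbit l k else qbit l m == qbit l k)%:R)); last first.
  by move=> l _; case: (l == j).
rewrite prod_nat.
suff -> : [forall l : 'I_t, if l == j then qbit l m != qbit l k else qbit l m == qbit l k] = (m == flo k) by [].
apply/forallP/eqP => [H|-> l].
  apply/val_inj/(bits_eq (ltn_ord m) (ltn_ord (flo k))) => l Hl.
  have := H (Ordinal Hl); rewrite /= qbit_flip.
  have -> : (Ordinal Hl == j) = (l == j) by [].
  case: (l =P j) => [->|_]; last by move/eqP.
  by case: (qbit j m); case: (qbit j k).
rewrite /= qbit_flip.
have -> : (l == j) = (val l == val j) by [].
case: (val l =P val j) => [->|_] //.
by case: (qbit j k).
Qed.

Lemma Zj_entry m k : Zj m k = (m == k)%:R * zz k.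
Proof.
rewrite psE (eq_bigr (fun l : 'I_t => (qbit l m == qbit l k)%:R * (if (l == j) && qbit l k then -1 else 1))); last first.
  move=> l _ /=; case: (l == j); rewrite /sigma /= ?mulr1 //.
  by case: (qbit l m); case: (qbit l k); rewrite /= ?mul1r ?mul0r.
rewrite big_split /= prod_nat.
have -> : [forall l : 'I_t, qbit l m == qbit l k] = (m == k).
  apply/forallP/eqP => [H|-> l //].
  apply/val_inj/(bits_eq (ltn_ord m) (ltn_ord k)) => l Hl.
  exact/eqP/(H (Ordinal Hl)).
congr (_ * _); rewrite (bigD1 j) //= eqxx /= big1 ?mulr1 // => l /negbTE ->.
by [].
Qed.

Lemma mulmxXj (W : 'M[K]_(2 ^ t)) i k : (W *m Xj) i k = W i (flo k).
Proof.
rewrite mxE (bigD1 (flo k)) //= Xj_entry eqxx mulr1 big1 ?addr0 // => m Hm.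
by rewrite Xj_entry (negbTE Hm) mulr0.
Qed.

Lemma mulXjmx (W : 'M[K]_(2 ^ t)) i k : (Xj *m W) i k = W (flo i) k.
Proof.
rewrite mxE (bigD1 (flo i)) //= Xj_entry flo_eq eqxx mul1r big1 ?addr0 // => m Hm.
by rewrite Xj_entry flo_eq (negbTE Hm) mul0r.
Qed.

Lemma mulmxZj (W : 'M[K]_(2 ^ t)) i k : (W *m Zj) i k = W i k * zz k.
Proof.
rewrite mxE (bigD1 k) //= Zj_entry eqxx mul1r big1 ?addr0 // => m Hm.
by rewrite Zj_entry (negbTE Hm) mul0r mulr0.
Qed.

Lemma mulZjmx (W : 'M[K]_(2 ^ t)) i k : (Zj *m W) i k = zz i * W i k.
Proof.
rewrite mxE (bigD1 i) //= Zj_entry eqxx mul1r big1 ?addr0 // => m Hm.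
by rewrite Zj_entry eq_sym (negbTE Hm) mul0r mul0r.
Qed.

Lemma triv_comm (W : 'M[K]_(2 ^ t)) : acts_trivially_on W j ->
  W *m Xj = Xj *m W /\ W *m Zj = Zj *m W.
Proof.
case=> W' HW; split; apply/matrixP => i k.
  rewrite mulmxXj mulXjmx !HW /= !qclear_flip !qbit_flip eqxx.
  by case: (qbit j i); case: (qbit j k).
rewrite mulmxZj mulZjmx HW /zz.
by case: (qbit j i); case: (qbit j k); rewrite /= ?mul0r ?mulr0 // mulrC.
Qed.

Definition ofn (x : nat) : 'I_(2 ^ t) := Ordinal (@ltn_pmod x (2 ^ t) (expn_gt0 2 t)).

Lemma ofn_val (i : 'I_(2 ^ t)) : ofn i = i.
Proof. by apply/val_inj; rewrite /= modn_small. Qed.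
Lemma ofn_flip (i : 'I_(2 ^ t)) : ofn (flip j i) = flo i.
Proof. by apply/val_inj; rewrite /= modn_small // (flip_lt (ltn_ord j) (ltn_ord i)). Qed.

Lemma xNx (x : K) : x = - x -> x = 0.
Proof.
move=> H; have : x *+ 2 == 0 by rewrite mulr2n {1}H addNr.
by rewrite mulrn_eq0 /= => /eqP.
Qed.

Lemma comm_triv (W : 'M[K]_(2 ^ t)) :
  W *m Xj = Xj *m W -> W *m Zj = Zj *m W -> acts_trivially_on W j.
Proof.
move=> HX HZ.
exists (fun x y => W (ofn x) (ofn y)) => i k.
have HX' : forall i k, W (flo i) (flo k) = W i k.
  move=> a b; have := congr1 (fun M : 'M[K]_(2 ^ t) => M a (flo b)) HX.
  by rewrite /= mulmxXj mulXjmx floK => ->.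
have HZ' := congr1 (fun M : 'M[K]_(2 ^ t) => M i k) HZ; rewrite /= mulmxZj mulZjmx /zz in HZ'.
rewrite !qclearE.
case: (qbit j i =P qbit j k) => [E|NE].
  rewrite mul1r E; case: (qbit j k); rewrite ?ofn_flip ?ofn_val //.
rewrite mul0r; apply: xNx.
move: NE HZ'; case: (qbit j i); case: (qbit j k) => //= _.
  by rewrite mulr1 mulN1r.
by rewrite mulrN1 mul1r => ->.
Qed.

Lemma ip_Xj : ip Xj.
Proof. by exists 0%N, (fun l => if l == j then @Ordinal 4 1 isT else ord0); rewrite expr0 scale1r. Qed.
Lemma ip_Zj : ip Zj.
Proof. by exists 0%N, (fun l => if l == j then @Ordinal 4 3 isT else ord0); rewrite expr0 scale1r. Qed.
End M2.
Section M3.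
Variable K : numClosedFieldType.
Variable n : nat.
Implicit Types A B X : 'M[K]_n.

Lemma comm_mul A B X a b : A *m X = a *: (X *m A) -> B *m X = b *: (X *m B) ->
  (A *m B) *m X = (a * b) *: (X *m (A *m B)).
Proof.
move=> HA HB.
by rewrite -mulmxA HB -scalemxAr mulmxA (mulmxA A X B) HA -scalemxAl scalerA mulrC.
Qed.

Lemma comm_inv A B X a : A *m X = a *: (X *m A) -> A *m B = 1%:M -> B *m A = 1%:M ->
  a * a = 1 -> B *m X = a *: (X *m B).
Proof.
move=> HA HAB HBA Haa.
have HXA : X *m A = a *: (A *m X) by rewrite HA scalerA Haa scale1r.
rewrite -[B *m X]mulmx1 -HAB (mulmxA (B *m X) A B) -(mulmxA B X A) HXA -scalemxAr -scalemxAl.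
by rewrite (mulmxA B A X) HBA mul1mx.
Qed.
End M3.

Theorem proposition2 (K : numClosedFieldType) (t : nat) (C P : 'M[K]_(2 ^ t)) :
  is_psc C -> is_pauli P ->
  exists Q : 'M[K]_(2 ^ t),
    [/\ is_pauli Q,
        ctrl C *m idtens P = ctrl Q *m idtens P *m ctrl C,
        Q *m C = C *m Q \/ Q *m C = - (C *m Q)
      & forall j : 'I_t, in_supp Q j -> in_supp C j].
Proof.
move=> [[HCu HCcl] [_ HCC]] HP.
have ipP : ip P by apply/pauli_ip.
have HCD : C *m adjmx C = 1%:M := HCu.
have HDC : adjmx C *m C = 1%:M := mulmx1C HCu.
have ipE : ip (C *m P *m adjmx C) by apply/pauli_ip/HCcl.
pose Q := C *m P *m adjmx C *m adjmx P.
have ipQ : ip Q by apply: ip_mul ipE (ip_adj ipP).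
have HPu := ip_unitary ipP.
have HPu' := ip_unitary' ipP.
have HQPC : Q *m P *m C = C *m P.
  by rewrite /Q -(mulmxA _ (adjmx P) P) HPu' mulmx1 -mulmxA HDC mulmx1.
exists Q; split.
- by apply/pauli_ip.
- rewrite /ctrl /idtens !mulmx_block !(mul1mx, mulmx1, mul0mx, mulmx0, addr0, add0r) HQPC //.
- have ipR : ip (C *m C) by apply/pauli_ip.
  have [m HRP] := ip_comm ipR ipP.
  have [m' HQa] := ip_adj_sign ipQ.
  have HCQ : C *m Q = (-1) ^+ m *: (adjmx Q *m C).
    have -> : adjmx Q *m C = P *m C *m adjmx P.
      rewrite /Q !adjmxM !adjmxK !mulmxA -(mulmxA _ (adjmx C) C) HDC mulmx1 //.
    rewrite /Q !mulmxA HRP -!scalemxAl; congr (_ *: _).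
    by rewrite !mulmxA -(mulmxA (P *m C) C (adjmx C)) HCD mulmx1.
  have H : Q *m C = (-1) ^+ (m + m') *: (C *m Q).
    rewrite HCQ HQa -scalemxAl scalerA -exprD scalerA -exprD -signr_odd.
    by rewrite !oddD; case: (odd m); case: (odd m'); rewrite /= ?expr0 ?scale1r.
  rewrite -signr_odd in H; case: (odd (m + m')) in H; [right|left]; rewrite H ?expr1 ?scaleN1r ?expr0 ?scale1r //.
- move=> j HQj HCj; apply: HQj.
  have [HCX HCZ] := triv_comm HCj.
  have key : forall X, ip X -> C *m X = X *m C -> Q *m X = X *m Q.
    move=> X ipX HCX'.
    have [s HPX] := ip_comm ipP ipX.
    have h1 : C *m X = 1 *: (X *m C) by rewrite scale1r.
    have hss : (-1) ^+ s * (-1) ^+ s = 1 :> K.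
      by rewrite -exprD -signr_odd addnn odd_double.
    have hD := comm_inv h1 HCD HDC (mulr1 1).
    have hPa := comm_inv HPX HPu HPu' hss.
    have := comm_mul (comm_mul (comm_mul h1 HPX) hD) hPa.
    by rewrite mul1r mulr1 hss scale1r.
  apply: comm_triv; apply: key; [exact: ip_Xj|exact: HCX|exact: ip_Zj|exact: HCZ].
Qed.
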